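(* Constructor has a strategy ensuring $g(n,K_3,S_4)\ge \frac{n}{3}(1+o(1))$ as $n\to\infty$, where $S_4$ is the star with $4$ leaves.
   Context: Constructor-Blocker game: given graphs $H$ and $F$, two players, Constructor and Blocker, alternately claim previously unclaimed edges of the complete graph $K_n$, Constructor moving first. Constructor may only claim an edge if her graph (the edges she has claimed) remains $F$-free (contains no subgraph isomorphic to $F$); Blocker may claim any unclaimed edge. The game ends when Constructor cannot claim any more edges or all edges are claimed. The score is the number of copies of $H$ in Constructor's graph at the end. Constructor maximizes, Blocker minimizes; $g(n,H,F)$ denotes the score under optimal play by both. *)

(* Defs.v *)
From mathcomp Require Import all_boot all_order all_algebra.
Set Implicit Arguments. Unset Strict Implicit. Unset Printing Implicit Defensive.
Import Order.TTheory GRing.Theory Num.Theory.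

(* A (simple) graph on a finite vertex type V is a set of edges, each edge
   being a 2-element subset of V. *)

Definition complete_edges (V : finType) : {set {set V}} := [set e : {set V} | #|e| == 2].

Definition embeds_via (VH V : finType) (EH : {set {set VH}}) (E : {set {set V}})
  (f : {ffun VH -> V}) : bool :=
  injectiveb f && [forall e : {set VH}, (e \in EH) ==> ((f @: e) \in E)].

Definition free_of (VF V : finType) (EF : {set {set VF}}) (E : {set {set V}}) : bool :=
  ~~ [exists f : {ffun VF -> V}, embeds_via EF E f].

(* Number of copies of H = (VH,EH) in E: number of distinct (edge sets of)
   subgraphs of E that are images of H under an embedding (H has no isolated
   vertices in our application, so subgraphs are determined by edge sets). *)
Definition copies (VH V : finType) (EH : {set {set VH}}) (E : {set {set V}}) : nat :=
  #|[set [set f @: e | e : {set VH} in EH] | f : {ffun VH -> V} & embeds_via EH E f]|.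

Definition K3 : {set {set 'I_3}} := complete_edges 'I_3.

Definition S4 : {set {set 'I_5}} := [set [set (ord0 : 'I_5); i] | i : 'I_5 & i != ord0].

Section Game.
Variables (VH VF : finType) (EH : {set {set VH}}) (EF : {set {set VF}}) (n : nat).

Definition edgesK : {set {set 'I_n}} := complete_edges 'I_n.

Definition score (C : {set {set 'I_n}}) : nat := copies EH C.

(* an upper bound for all scores (copies is the cardinality of a subset of
   {set {set 'I_n}}), used as neutral element for min over a nonempty set *)
Definition score_top : nat := #|{: {set {set 'I_n}}}|.

Definition cmoves (C B : {set {set 'I_n}}) : {set {set 'I_n}} :=
  [set e in edgesK | (e \notin C) && (e \notin B) && free_of EF (e |: C)].

Definition bmoves (C B : {set {set 'I_n}}) : {set {set 'I_n}} :=
  [set e in edgesK | (e \notin C) && (e \notin B)].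

(* Minimax value of the position (C,B) with [turnC] telling whether it is
   Constructor's turn; [k] is fuel (each move claims an edge, so #|edgesK|
   fuel suffices from the empty position). *)
Fixpoint gval (k : nat) (turnC : bool) (C B : {set {set 'I_n}}) : nat :=
  match k with
  | 0 => score C
  | k'.+1 =>
    if turnC then
      if cmoves C B == set0 then score C
      else \max_(e in cmoves C B) gval k' false (e |: C) B
    else
      if bmoves C B == set0 then score C
      else \big[minn/score_top]_(e in bmoves C B) gval k' true C (e |: B)
  end.

Definition g_value : nat := gval #|edgesK| true set0 set0.

End Game.

(* Main.v *)
Require Import Defs.
From mathcomp Require Import all_boot all_order all_algebra zify ring lra.
Set Implicit Arguments. Unset Strict Implicit. Unset Printing Implicit Defensive.

Section Game.
Variable n : nat.
Notation V := 'I_n.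
Notation E := {set {set V}}.
Notation gv := (@gval _ _ K3 S4 n).
Notation sc := (@score _ K3 n).

Definition Sset (C : E) :=
  [set [set f @: e | e : {set 'I_3} in K3] | f : {ffun 'I_3 -> V} & embeds_via K3 C f].

Lemma scE (C : E) : sc C = #|Sset C|.
Proof. by []. Qed.

Lemma embeds_mono (C C' : E) f : C \subset C' -> embeds_via K3 C f -> embeds_via K3 C' f.
Proof.
move=> sCC' /andP[inj /forallP H]; apply/andP; split=> //.
apply/forallP => e; apply/implyP => eK; move/implyP: (H e) => /(_ eK).
by apply: (subsetP sCC').
Qed.

Lemma Sset_mono (C C' : E) : C \subset C' -> Sset C \subset Sset C'.
Proof.
move=> sCC'; apply/subsetP => X /imsetP [f]; rewrite inE => Hf ->.
by apply/imsetP; exists f => //; rewrite inE; apply: embeds_mono Hf.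
Qed.

Lemma score_mono (C C' : E) : C \subset C' -> sc C <= sc C'.
Proof. by move=> h; rewrite !scE; apply/subset_leq_card/Sset_mono. Qed.

Lemma score_le_top (C : E) : sc C <= score_top n.
Proof. by rewrite scE /score_top max_card. Qed.

Lemma gval_le_top k b (C B : E) : gv k b C B <= score_top n.
Proof.
elim: k b C B => [|k IH] b C B /=; first exact: score_le_top.
case: b.
  case: ifP => _; first exact: score_le_top.
  by apply/bigmax_leqP => e _; apply: IH.
case: ifP => _; first exact: score_le_top.
by apply: (big_ind (fun m => m <= score_top n)) => // x y hx hy; rewrite geq_min hx.
Qed.

Lemma cmoves_sub (C B : E) : cmoves S4 C B \subset bmoves C B.
Proof.
by apply/subsetP => e; rewrite !inE => /andP[-> /andP[/andP[-> ->] _]].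
Qed.

Lemma gval_ge_score k b (C B : E) : sc C <= gv k b C B.
Proof.
elim: k b C B => [|k IH] b C B //=.
case: b.
  case: ifP => // /negbT/set0Pn [e he].
  apply: leq_trans (score_mono _) (leq_trans (IH _ _ _) (leq_bigmax_cond _ he)).
  exact: subsetUr.
case: ifP => // _.
apply: (big_ind (fun m => sc C <= m)) => //; first exact: score_le_top.
by move=> x y hx hy; rewrite leq_min hx.
Qed.

Lemma gval_C k (C B : E) e t : e \in cmoves S4 C B ->
  t <= gv k false (e |: C) B -> t <= gv k.+1 true C B.
Proof.
move=> he ht /=; case: ifP => [/eqP E0|_]; first by rewrite E0 inE in he.
exact: leq_trans ht (leq_bigmax_cond _ he).
Qed.

Lemma gval_B k (C B : E) t : (bmoves C B == set0 -> t <= sc C) ->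
  (forall e, e \in bmoves C B -> t <= gv k true C (e |: B)) -> t <= gv k.+1 false C B.
Proof.
move=> H0 H /=; case: ifP => [/H0 //|/negbT/set0Pn [e0 he0]].
apply: (big_ind (fun m => t <= m)).
- exact: leq_trans (H _ he0) (gval_le_top _ _ _ _).
- by move=> x y hx hy; rewrite leq_min hx.
- exact: H.
Qed.

Lemma bmovesC_lt (C B : E) e : e \in bmoves C B -> #|bmoves (e |: C) B| < #|bmoves C B|.
Proof.
move=> he; apply: proper_card; apply/properP; split.
  by apply/subsetP => f; rewrite !inE => /and3P[-> /norP[_ ->] ->].
by exists e; rewrite // !inE eqxx /= andbF.
Qed.

Lemma bmovesB_lt (C B : E) e : e \in bmoves C B -> #|bmoves C (e |: B)| < #|bmoves C B|.
Proof.
move=> he; apply: proper_card; apply/properP; split.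
  by apply/subsetP => f; rewrite !inE => /and3P[-> -> /norP[_ ->]].
by exists e; rewrite // !inE eqxx /= !andbF.
Qed.

Lemma stepC k (C B : E) e t : e \in cmoves S4 C B -> #|bmoves C B| <= k ->
  (forall k', k' < k -> #|bmoves (e |: C) B| <= k' -> t <= gv k' false (e |: C) B) ->
  t <= gv k true C B.
Proof.
move=> he hk H.
have hb : e \in bmoves C B by apply: (subsetP (cmoves_sub C B)).
case: k hk H => [|k] hk H.
  by move: hk; rewrite leqn0 cards_eq0 => /eqP E0; rewrite E0 inE in hb.
apply: gval_C he _; apply: H => //.
by rewrite -ltnS; apply: leq_trans (bmovesC_lt hb) hk.
Qed.

Lemma stepB k (C B : E) t : #|bmoves C B| <= k ->
  (bmoves C B == set0 -> t <= sc C) ->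
  (forall e k', e \in bmoves C B -> k' < k -> #|bmoves C (e |: B)| <= k' ->
      t <= gv k' true C (e |: B)) ->
  t <= gv k false C B.
Proof.
move=> hk H0 H.
case: k hk H => [|k] hk H.
  by move: hk; rewrite leqn0 cards_eq0 => /H0.
apply: gval_B => // e he; apply: H => //.
by rewrite -ltnS; apply: leq_trans (bmovesB_lt he) hk.
Qed.

End Game.

Section Graph.
Variable n : nat.
Notation V := 'I_n.
Notation E := {set {set V}}.
Notation sc := (@score _ K3 n).

Definition deg (G : E) (u : V) := #|[set e in G | u \in e]|.

Lemma deg_add (G : E) (e : {set V}) (u : V) : e \notin G -> deg (e |: G) u = deg G u + (u \in e).
Proof.
move=> he; rewrite /deg.
case: (boolP (u \in e)) => ue.
  have -> : [set f in e |: G | u \in f] = e |: [set f in G | u \in f].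
    by apply/setP => f; rewrite !inE; case: (f =P e) => [->|]; rewrite ?ue.
  by rewrite cardsU1 inE (negbTE he) addnC.
rewrite addn0; apply: eq_card => f; rewrite !inE.
by case: (f =P e) => [->|]; rewrite ?(negbTE ue) ?andbF.
Qed.

Lemma deg_mono (G G' : E) u : G \subset G' -> deg G u <= deg G' u.
Proof.
move=> s; apply: subset_leq_card; apply/subsetP => f; rewrite !inE.
by case/andP => /(subsetP s) -> ->.
Qed.

Lemma deg0_notin (G : E) (u : V) (e : {set V}) : deg G u = 0 -> u \in e -> e \notin G.
Proof.
move=> /eqP; rewrite cards_eq0 => /eqP h ue; apply/negP => eG.
by move: h => /setP /(_ e); rewrite !inE eG ue.
Qed.

Definition nbr (G : E) (u : V) := [set w | [set u; w] \in G].

Lemma set2_inj (u a b : V) : [set u; a] = [set u; b] -> a = b.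
Proof.
move=> h.
have : a \in [set u; b] by rewrite -h !inE eqxx orbT.
rewrite !inE => /orP [/eqP au|/eqP //].
have : b \in [set u; a] by rewrite h !inE eqxx orbT.
by rewrite !inE au orbb => /eqP.
Qed.

Lemma nbr_card (G : E) u : #|nbr G u| <= deg G u.
Proof.
rewrite /deg -(card_imset _ (@set2_inj u)).
apply: subset_leq_card; apply/subsetP => f /imsetP [w]; rewrite inE => hw ->.
by rewrite inE hw !inE eqxx.
Qed.

Lemma handshake (G : E) : G \subset edgesK n -> \sum_u deg G u = 2 * #|G|.
Proof.
move=> sG.
have -> : \sum_u deg G u = \sum_u \sum_(e in G) (u \in e : nat).
  apply: eq_bigr => u _; rewrite /deg -sum1_card big_mkcond /=.
  rewrite [RHS]big_mkcond /=; apply: eq_bigr => e _; rewrite inE.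
  by case: (e \in G); case: (u \in e).
rewrite exchange_big /= -sum1_card big_distrr /=; apply: eq_bigr => e eG.
have /(subsetP sG) := eG; rewrite inE => /eqP <-.
by rewrite muln1 -sum1_card [RHS]big_mkcond.
Qed.

Lemma set2_img (T T' : finType) (f : T -> T') (a b : T) : f @: [set a; b] = [set f a; f b].
Proof. by rewrite imsetU1 imset_set1. Qed.

Lemma free_deg3 (G : E) : (forall u, deg G u <= 3) -> free_of S4 G.
Proof.
move=> H; apply/negP => /existsP [f /andP [/injectiveP inj /forallP Hf]].
set c := f ord0.
have hE : forall i : 'I_5, i != ord0 -> [set c; f i] \in G.
  move=> i hi; move/implyP: (Hf [set ord0; i]); rewrite set2_img; apply.
  rewrite /S4; apply/imsetP; exists i => //; by rewrite inE.
have inj2 : {in [set i : 'I_5 | i != ord0] &, injective (fun i => [set c; f i])}.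
  by move=> i j _ _ /set2_inj /inj.
have := card_in_imset inj2.
have -> : [set i : 'I_5 | i != ord0] = [set~ ord0] by apply/setP => i; rewrite !inE.
rewrite cardsC1 card_ord /= => h.
have : 4 <= deg G c.
  rewrite -h /deg; apply: subset_leq_card; apply/subsetP => e /imsetP [i].
  by rewrite !inE => hi ->; rewrite hE // !inE eqxx.
by rewrite leqNgt ltnS H.
Qed.
End Graph.

Section Tri.
Variable n : nat.
Notation V := 'I_n.
Notation E := {set {set V}}.
Notation sc := (@score _ K3 n).

Lemma Sset_edges (C : E) X x : X \in Sset C -> x \in X -> x \in C.
Proof.
move=> /imsetP [g]; rewrite inE => /andP [_ /forallP Hg] -> /imsetP [e he ->].
by move/implyP: (Hg e); apply.
Qed.

Definition o0 : 'I_3 := @Ordinal 3 0 isT.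
Definition o1 : 'I_3 := @Ordinal 3 1 isT.
Definition o2 : 'I_3 := @Ordinal 3 2 isT.

Lemma newtri (C C' : E) (a b c : V) :
  a != b -> a != c -> b != c ->
  [set a; b] \in C' -> [set a; c] \in C' -> [set b; c] \in C' ->
  C \subset C' -> [set a; b] \notin C -> sc C < sc C'.
Proof.
move=> ab ac bc hab hac hbc sCC' nab.
pose f := [ffun i : 'I_3 => if val i == 0 then a else if val i == 1 then b else c].
have finj : injective f.
  move=> [[|[|[|i]]] hi] [[|[|[|j]]] hj] //=; rewrite !ffunE /=;
  try (by move=> _; apply: val_inj);
  by move=> E0; rewrite E0 eqxx in ab ac bc.
have fin : forall i, f i \in [set a; b; c].
  by move=> [[|[|[|i]]] hi] //; rewrite ffunE /= !inE eqxx ?orbT.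
have pairs : forall u w, u \in [set a; b; c] -> w \in [set a; b; c] -> u != w -> [set u; w] \in C'.
  move=> u w; rewrite !inE => /orP[/orP[]|] /eqP -> /orP[/orP[]|] /eqP ->;
  rewrite ?eqxx // => _; by rewrite 1?setUC.
have emb : embeds_via K3 C' f.
  apply/andP; split; first by apply/injectiveP.
  apply/forallP => e; apply/implyP; rewrite inE => /cards2P [i [j [ij ->]]].
  rewrite set2_img; apply: pairs; rewrite ?fin //.
  by apply: contra ij => /eqP /finj ->.
rewrite !scE; apply: proper_card; apply/properP; split; first exact: Sset_mono.
exists [set f @: e | e : {set 'I_3} in K3].
  by apply/imsetP; exists f; rewrite ?inE.
apply/negP => /Sset_edges h; move/negP: nab; apply; apply: h.
apply/imsetP; exists [set o0; o1]; first by rewrite inE cards2.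
by rewrite set2_img !ffunE.
Qed.
End Tri.

Section Strat.
Variables n d : nat.
Notation V := 'I_n.
Notation E := {set {set V}}.
Notation sc := (@score _ K3 n).
Notation gv := (@gval _ _ K3 S4 n).

Definition Dset (C : E) := [set u | deg C u <= 1].
Definition Zg (C B : E) := [set u | (deg C u == 0) && (deg B u <= d)].
Definition Qs (C B : E) := [set u | (deg C u == 1) && (deg B u <= d)].
Definition bad (B : E) := [set u | d < deg B u].

Definition Inv (C B : E) := [/\ C \subset edgesK n, B \subset edgesK n,
  forall u, deg C u <= 3 & [/\ #|B| <= #|C|, n <= 3 * sc C + #|Dset C| & #|Qs C B| <= 2]].

Definition Lb := 3 * d + 8 + (3 * n) %/ d.+1.
Definition tg := (n - Lb) %/ 3.

Lemma card_bigcup_le (Q : {set V}) (F : V -> {set V}) :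
  #|\bigcup_(q in Q) F q| <= \sum_(q in Q) #|F q|.
Proof.
apply: (big_ind2 (fun (S : {set V}) m => #|S| <= m)) => //; first by rewrite cards0.
by move=> A a B b ha hb; apply: leq_trans (leq_card_setU A B) (leq_add ha hb).
Qed.

Lemma stop_lemma (C B : E) : Inv C B -> #|Zg C B| < 3 * d + 7 -> tg <= sc C.
Proof.
case=> sC sB deg3 [BC Phi Q2] hZ.
have hD : #|Dset C| <= #|Zg C B| + #|Qs C B| + #|bad B|.
  apply: leq_trans (subset_leq_card (_ : Dset C \subset (Zg C B :|: Qs C B) :|: bad B)) _.
    apply/subsetP => u; rewrite !inE.
    case: (ltnP d (deg B u)) => hb; rewrite ?orbT // ?andbT orbF.
    by case: (deg C u) => [|[|]].
  apply: leq_trans (leq_card_setU _ _) _; rewrite leq_add2r; exact: leq_card_setU.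
have hbad : #|bad B| * d.+1 <= 3 * n.
  have h1 : #|bad B| * d.+1 <= \sum_u deg B u.
    rewrite -sum_nat_const; apply: leq_trans (_ : \sum_(u in bad B) deg B u <= _).
      by apply: leq_sum => u; rewrite inE.
    by rewrite [X in _ <= X](bigID (mem (bad B))) /= leq_addr.
  apply: leq_trans h1 _; rewrite handshake //.
  apply: leq_trans (_ : 2 * #|C| <= _); first by rewrite leq_mul2l BC orbT.
  rewrite -handshake //; apply: leq_trans (_ : \sum_(u : V) 3 <= _).
    by apply: leq_sum => u _; apply: deg3.
  by rewrite sum_nat_const card_ord mulnC.
have hb2 : #|bad B| <= (3 * n) %/ d.+1 by rewrite leq_divRL.
rewrite /tg /Lb; lia.
Qed.

End Strat.

Section Help.
Variables n d : nat.
Notation V := 'I_n.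
Notation E := {set {set V}}.
Notation sc := (@score _ K3 n).

Lemma pick (A X : {set V}) : #|X| < #|A| -> exists2 z, z \in A & z \notin X.
Proof.
move=> h; case: (boolP (A \subset X)) => [s|/subsetPn [z ??]]; last by exists z.
by move: (subset_leq_card s); rewrite leqNgt h.
Qed.

Lemma set2_neq (a b c e : V) : a \notin [set c; e] -> [set a; b] != [set c; e].
Proof. by apply: contra => /eqP <-; rewrite !inE eqxx. Qed.

Lemma card3 (a b c : V) : #|[set a; b; c]| <= 3.
Proof.
apply: leq_trans (leq_card_setU _ _) _; rewrite cards1 addn1 ltnS.
by rewrite cards2; case: (a != b).
Qed.

Lemma cmove_ok (C B : E) (a b : V) : a != b -> [set a; b] \notin C -> [set a; b] \notin B ->
  (forall u, deg C u <= 3) -> deg C a <= 2 -> deg C b <= 2 ->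
  [set a; b] \in cmoves S4 C B /\ (forall u, deg ([set a; b] |: C) u <= 3).
Proof.
move=> ab nC nB d3 da db.
have D : forall u, deg ([set a; b] |: C) u <= 3.
  move=> u; rewrite deg_add // !inE.
  case: (u =P a) => [->|_] /=; first by rewrite addn1 ltnS.
  case: (u =P b) => [->|_] /=; first by rewrite addn1 ltnS.
  by rewrite addn0.
split=> //; rewrite !inE cards2 ab nC nB /=; exact: free_deg3.
Qed.

Lemma witB (C B : E) (a b : V) : a != b -> [set a; b] \notin C -> [set a; b] \notin B ->
  (bmoves C B == set0) = false.
Proof.
move=> ab nC nB; apply/negbTE/set0Pn; exists [set a; b].
by rewrite !inE cards2 ab nC nB.
Qed.

Lemma bmoveP (C B : E) e : e \in bmoves C B -> [/\ e \in edgesK n, e \notin C & e \notin B].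
Proof. by rewrite !inE => /and3P [h1 h2 h3]; split; rewrite ?inE. Qed.

Lemma degB1 (B : E) f u : deg (f |: B) u <= deg B u + 1.
Proof.
case: (boolP (f \in B)) => h.
  by rewrite (setUidPr (_ : [set f] \subset B)) ?sub1set // leq_addr.
by rewrite deg_add // leq_add2l leq_b1.
Qed.

Lemma nbr1 (B : E) f u : #|nbr (f |: B) u| <= deg B u + 1.
Proof. exact: leq_trans (nbr_card _ _) (degB1 _ _ _). Qed.

Lemma inv_final (C B C' B' : E) (P : {set V}) :
  Inv d C B -> C' \subset edgesK n -> B' \subset edgesK n -> #|B'| <= #|C'| ->
  (forall u, deg C' u <= 3) -> sc C < sc C' -> #|P| <= 3 ->
  (forall u, u \notin P -> deg C u <= 1 -> deg C' u <= 1) -> #|Qs d C' B'| <= 2 ->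
  Inv d C' B'.
Proof.
case=> _ _ _ [_ Phi _] sC' sB' BC' d3 lsc hP hD hQ; split=> //; split=> //.
have h1 : Dset C :\: P \subset Dset C'.
  by apply/subsetP => u; rewrite !inE => /andP [uP du]; apply: hD.
have h2 := subset_leq_card h1.
have h3 : #|Dset C :&: P| <= #|P| by apply: subset_leq_card; apply: subsetIr.
move: h2; rewrite cardsD => h2.
lia.
Qed.
End Help.

Section Help2.
Variables n d : nat.
Notation V := 'I_n.
Notation E := {set {set V}}.

Lemma cardU1_le (a : V) (S : {set V}) : #|a |: S| <= #|S| + 1.
Proof. by rewrite cardsU1 addnC leq_add2l leq_b1. Qed.

Lemma set2_neq' (a b c e : V) : b \notin [set c; e] -> [set a; b] != [set c; e].
Proof. by rewrite [[set a; b]]setUC; apply: set2_neq. Qed.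

Lemma in_nbr (G : E) u w : (w \in nbr G u) = ([set u; w] \in G).
Proof. by rewrite inE. Qed.

Lemma cardsU1_new (G : E) e : e \notin G -> #|e |: G| = #|G| + 1.
Proof. by move=> h; rewrite cardsU1 h addnC. Qed.

Lemma cardsU1_leE (G : E) e : #|e |: G| <= #|G| + 1.
Proof. by rewrite cardsU1 addnC leq_add2l leq_b1. Qed.
End Help2.

Lemma q_bound (T : finType) (Q S : {set T}) v w' : S \subset (Q :\ v) :|: [set w'] -> #|Q| <= 2 ->
  (v \in Q) || (#|Q| <= 1) -> #|S| <= 2.
Proof.
move=> sS Q2 vQ; apply: leq_trans (subset_leq_card sS) _.
apply: leq_trans (leq_card_setU _ _).1 _; rewrite cards1.
have := cardsD1 v Q; case: (v \in Q) vQ => /= vQ h; lia.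
Qed.

Ltac dist := rewrite ?inE; repeat (apply/norP; split); try done; try (rewrite eq_sym; done).

Lemma cardU_le (T : finType) (A B : {set T}) : #|A :|: B| <= #|A| + #|B|.
Proof. exact: (leq_card_setU A B).1. Qed.

Lemma cmove_edge n (C B : {set {set 'I_n}}) e : e \in cmoves S4 C B -> e \in edgesK n.
Proof. by rewrite !inE => /andP [h _]. Qed.

Section Main.
Variables n d : nat.
Notation V := 'I_n.
Notation E := {set {set V}}.
Notation sc := (@score _ K3 n).
Notation gv := (@gval _ _ K3 S4 n).

Lemma main k : forall C B : E, #|bmoves C B| <= k -> Inv d C B -> tg n d <= gv k true C B.
Proof.
elim/ltn_ind: k => k IH C B hk inv.
have [sC sB d3 [BC Phi Q2]] := inv.
set Q := Qs d C B in Q2 *. set Z := Zg d C B.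
case: (ltnP #|Z| (3 * d + 7)) => hZ.
  exact: leq_trans (stop_lemma inv hZ) (gval_ge_score _ _ _ _).
have ZP : forall u, u \in Z -> deg C u = 0 /\ deg B u <= d.
  by move=> u; rewrite inE => /andP [/eqP ? ?].
have QP : forall u, u \in Q -> deg C u = 1 /\ deg B u <= d.
  by move=> u; rewrite inE => /andP [/eqP ? ?].
set NQ := \bigcup_(q in Q) nbr B q.
have hNQ : #|NQ| <= 2 * d.
  apply: leq_trans (card_bigcup_le _ _) _.
  apply: leq_trans (_ : \sum_(q in Q) d <= _).
    by apply: leq_sum => q /QP [_ h]; exact: leq_trans (nbr_card _ _) h.
  by rewrite sum_nat_const leq_mul2r Q2 orbT.
have nQ : forall q u, q \in Q -> u \notin NQ -> [set q; u] \notin B.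
  move=> q u qQ; apply: contra => h; apply/bigcupP; exists q => //.
  by rewrite in_nbr.
have cx : #|NQ| < #|Z| by clear -hNQ hZ; lia.
have [x xZ xN] := pick cx.
have [dCx dBx] := ZP x xZ.
have cy : #|x |: (NQ :|: nbr B x)| < #|Z|.
  have h1 : #|x |: (NQ :|: nbr B x)| <= #|NQ :|: nbr B x| + 1 := cardU1_le _ _.
  have h2 : #|NQ :|: nbr B x| <= #|NQ| + #|nbr B x| := cardU_le _ _.
  have h3 : #|nbr B x| <= deg B x := nbr_card _ _. clear -h1 h2 h3 dBx hNQ hZ; lia.
have [y yZ] := pick cy.
rewrite in_setU1 in_setU in_nbr negb_or => /andP [yx /norP [yNQ yBx]].
have [dCy dBy] := ZP y yZ.
have xy : x != y by rewrite eq_sym.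
have nC1 : [set x; y] \notin C by apply: (deg0_notin dCx); rewrite !inE eqxx.
have [m1 d1] := cmove_ok xy nC1 yBx d3 (ltac:(rewrite dCx; done)) (ltac:(rewrite dCy; done)).
apply: (stepC m1 hk) => k1 lt1 hk1.
set C1 := [set x; y] |: C.
have dC1 : forall u, deg C1 u = deg C u + (u \in [set x; y]) by move=> u; rewrite deg_add.
apply: stepB hk1 _ _.
  have cz : #|[set x; y] :|: nbr B x| < #|Z|.
    have h1 : #|[set x; y] :|: nbr B x| <= #|[set x; y]| + #|nbr B x| := cardU_le _ _.
    have h2 : #|[set x; y]| = 2 by rewrite cards2 xy.
    have h3 : #|nbr B x| <= deg B x := nbr_card _ _. clear -h1 h2 h3 dBx hZ; lia.
  have [z zZ] := pick cz.
  rewrite in_setU in_nbr !inE negb_or => /andP [/norP [zx zy] zB].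
  rewrite (@witB _ C1 B x z) //; first by rewrite eq_sym.
  rewrite in_setU1 negb_or; apply/andP; split.
    by apply: set2_neq'; dist.
  by apply: (deg0_notin dCx); rewrite !inE eqxx.
move=> f1 k2 hf1 lt2 hk2.
set B1 := f1 |: B.
have [f1K f1C f1B] := bmoveP hf1.
have nB1 : forall a b, [set a; b] \notin B -> [set a; b] != f1 -> [set a; b] \notin B1.
  by move=> a b h1 h2; rewrite in_setU1 negb_or h2.
have [v [[vx vy dCv dBv] [vxB vyB vQ]]] : exists v, [/\ v != x, v != y, deg C v <= 1 & deg B v <= d]
    /\ [/\ [set x; v] \notin B1, [set y; v] \notin B1 & (v \in Q) || (#|Q| <= 1)].
  case: (boolP [exists q in Q, ([set x; q] \notin B1) && ([set y; q] \notin B1)]).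
    move=> /existsP [q /and3P [qQ qx qy]]; have [dq bq] := QP q qQ.
    exists q; split; split => //; last by rewrite qQ.
    - by apply/eqP => E0; move: dq; rewrite E0 dCx.
    - by apply/eqP => E0; move: dq; rewrite E0 dCy.
    - by rewrite dq.
  rewrite negb_exists => /forallP hall.
  have Q1 : #|Q| <= 1.
    have memf : forall q, q \in Q -> q \in f1 /\ (forall u, u \in f1 -> [\/ u = q, u = x | u = y]).
      move=> q qQ; move: (hall q); rewrite qQ /= negb_and !negbK.
      have hxq : [set x; q] \notin B by rewrite setUC; apply: nQ.
      have hyq : [set y; q] \notin B by rewrite setUC; apply: nQ.
      rewrite !in_setU1 (negbTE hxq) (negbTE hyq) !orbF.
      case/orP => /eqP <-; (split; first by rewrite !inE eqxx orbT);
        move=> u; rewrite !inE => /orP [] /eqP ->;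
        first [by apply: Or31 | by apply: Or32 | by apply: Or33].
    apply/card_le1_eqP => q1 q2 q1Q q2Q.
    have [f1q1 _] := memf q1 q1Q; have [_ h] := memf q2 q2Q.
    have [dq1 _] := QP q1 q1Q.
    case: (h q1 f1q1) => // E0; move: dq1; rewrite E0 ?dCx ?dCy => /eqP //.
  have cv : #|[set x; y] :|: (nbr B1 x :|: nbr B1 y)| < #|Z|.
    have h1 : #|[set x; y] :|: (nbr B1 x :|: nbr B1 y)| <= #|[set x; y]| + #|nbr B1 x :|: nbr B1 y| := cardU_le _ _.
    have h2 : #|nbr B1 x :|: nbr B1 y| <= #|nbr B1 x| + #|nbr B1 y| := cardU_le _ _.
    have h3 : #|[set x; y]| = 2 by rewrite cards2 xy.
    have h4 : #|nbr B1 x| <= deg B x + 1 := nbr1 _ _ _.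
    have h5 : #|nbr B1 y| <= deg B y + 1 := nbr1 _ _ _. clear -h1 h2 h3 h4 h5 dBx dBy hZ; lia.
  have [v vZ] := pick cv.
  rewrite !in_setU !in_nbr !inE !negb_or => /andP [/andP [vx vy] /andP [vxB vyB]].
  have [dv bv] := ZP v vZ.
  exists v; split; split => //.
  - by rewrite dv.
  - by rewrite in_setU1 negb_or.
  - by rewrite in_setU1 negb_or.
  - by apply/orP; right.
have cy' : #|[set x; y; v] :|: (nbr B1 x :|: nbr B1 y :|: nbr B1 v)| < #|Z|.
  have h1 : #|[set x; y; v] :|: (nbr B1 x :|: nbr B1 y :|: nbr B1 v)| <=
     #|[set x; y; v]| + #|nbr B1 x :|: nbr B1 y :|: nbr B1 v| := cardU_le _ _.
  have h2 : #|nbr B1 x :|: nbr B1 y :|: nbr B1 v| <= #|nbr B1 x :|: nbr B1 y| + #|nbr B1 v| := cardU_le _ _.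
  have h2' : #|nbr B1 x :|: nbr B1 y| <= #|nbr B1 x| + #|nbr B1 y| := cardU_le _ _.
  have h3 : #|[set x; y; v]| <= 3 := card3 _ _ _.
  have h4 : #|nbr B1 x| <= deg B x + 1 := nbr1 _ _ _.
  have h5 : #|nbr B1 y| <= deg B y + 1 := nbr1 _ _ _.
  have h6 : #|nbr B1 v| <= deg B v + 1 := nbr1 _ _ _. clear -h1 h2 h2' h3 h4 h5 h6 dBx dBy dBv hZ; lia.
have [y' y'Z] := pick cy'.
rewrite !in_setU !in_nbr !inE !negb_or => /andP [/andP [/andP [y'x y'y] y'v] /andP [/andP [xy'B0 yy'B0] vy'B0]].
have xy'B : [set x; y'] \notin B1 by rewrite in_setU1 negb_or.
have yy'B : [set y; y'] \notin B1 by rewrite in_setU1 negb_or.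
have vy'B : [set v; y'] \notin B1 by rewrite in_setU1 negb_or.
clear xy'B0 yy'B0 vy'B0.
have [dCy' _] := ZP y' y'Z.
have ny'1 : [set x; y'] \notin C1.
  rewrite in_setU1 negb_or; apply/andP; split; first by apply: set2_neq'; dist.
  by apply: (deg0_notin dCx); rewrite !inE eqxx.
have [m2 d2] := cmove_ok (a:=x) (b:=y') (ltac:(by rewrite eq_sym)) ny'1 xy'B d1
  (ltac:(by rewrite dC1 dCx !inE eqxx)) (ltac:(by rewrite dC1 dCy' !inE (negbTE y'x) (negbTE y'y))).
apply: (stepC m2 hk2) => k3 lt3 hk3.
set C2 := [set x; y'] |: C1.
have nyy'2 : [set y; y'] \notin C2.
  rewrite !in_setU1 !negb_or; apply/and3P; split.
  - by apply: set2_neq; dist.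
  - by apply: set2_neq'; dist.
  - by apply: (deg0_notin dCy); rewrite !inE eqxx.
apply: stepB hk3 _ _.
  by rewrite (@witB _ C2 B1 y y') //; rewrite eq_sym.
move=> f2 k4 hf2 lt4 hk4.
set B2 := f2 |: B1.
have [f2K f2C f2B] := bmoveP hf2.
have dC2 : forall u, deg C2 u = deg C u + (u \in [set x; y]) + (u \in [set x; y'])
  by move=> u; rewrite deg_add // dC1.
case: (boolP ([set y; y'] \in B2)) => hyy.

  have f2E : f2 = [set y; y'].
    by move: hyy; rewrite /B2 in_setU1 (negbTE yy'B) orbF => /eqP.
  have vy' : v != y' by rewrite eq_sym.
  have vxB2 : [set v; x] \notin B2.
    rewrite in_setU1 negb_or f2E; apply/andP; split; first by apply: set2_neq; dist.
    by rewrite setUC.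
  have vyB2 : [set v; y] \notin B2.
    rewrite in_setU1 negb_or f2E; apply/andP; split; first by apply: set2_neq; dist.
    by rewrite setUC.
  have vy'B2 : [set v; y'] \notin B2.
    rewrite in_setU1 negb_or f2E; apply/andP; split; first by apply: set2_neq; dist.
    done.
  have dC2y : deg C2 y = 1 by rewrite dC2 dCy !inE eqxx eq_sym (negbTE xy) eq_sym (negbTE y'y).
  have dC2y' : deg C2 y' = 1 by rewrite dC2 dCy' !inE eqxx (negbTE y'x) (negbTE y'y).
  have dC2x : deg C2 x = 2 by rewrite dC2 dCx !inE eqxx.
  have dC2o : forall u, u != x -> u != y -> u != y' -> deg C2 u = deg C u.
    by move=> u ux uy uy'; rewrite dC2 !inE (negbTE ux) (negbTE uy) (negbTE uy') /= !addn0.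
  have dC2v : deg C2 v = deg C v by apply: dC2o.
  have inC2y : [set x; y] \in C2 by rewrite /C2 /C1 !inE eqxx orbT.
  have inC2y' : [set x; y'] \in C2 by rewrite /C2 !inE eqxx.
  have nvx2 : [set v; x] \notin C2.
    rewrite !in_setU1 !negb_or; apply/and3P; split.
    - by apply: set2_neq; dist.
    - by apply: set2_neq; dist.
    - by apply: (deg0_notin dCx); rewrite !inE eqxx orbT.
  have [m3 d3'] := cmove_ok (a:=v) (b:=x) vx nvx2 vxB2 d2
    (ltac:(by rewrite dC2v (leq_trans dCv))) (ltac:(by rewrite dC2x)).
  apply: (stepC m3 hk4) => k5 lt5 hk5.
  set C3 := [set v; x] |: C2.
  have dC3 : forall u, deg C3 u = deg C2 u + (u \in [set v; x]) by move=> u; rewrite deg_add.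
  have nvy3 : [set v; y] \notin C3.
    rewrite /C3 in_setU1 negb_or; apply/andP; split; first by apply: set2_neq'; dist.
    rewrite !in_setU1 !negb_or; apply/and3P; split.
    - by apply: set2_neq; dist.
    - by apply: set2_neq; dist.
    - by apply: (deg0_notin dCy); rewrite !inE eqxx orbT.
  apply: stepB hk5 _ _.
    by rewrite (@witB _ C3 B2 v y).
  move=> f3 k6 hf3 lt6 hk6.
  set B3 := f3 |: B2.
  have [f3K _ _] := bmoveP hf3.
  have [w [w' [hww' nvw]]] : exists w w', ((w = y /\ w' = y') \/ (w = y' /\ w' = y)) /\ [set v; w] \notin B3.
    case: (boolP ([set v; y] \in B3)) => h.
      exists y', y; split; first by right.
      have f3E : f3 = [set v; y] by move: h; rewrite /B3 in_setU1 (negbTE vyB2) orbF => /eqP.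
      rewrite /B3 in_setU1 negb_or vy'B2 andbT f3E; apply: set2_neq'; dist.
    by exists y, y'; split; [left|].
  have [[wx wv w'x w'v ww'] [dCw dCw' dC2w dC2w' inC2w]] :
     [/\ w != x, w != v, w' != x, w' != v & w != w'] /\
     [/\ deg C w = 0, deg C w' = 0, deg C2 w = 1, deg C2 w' = 1 & [set x; w] \in C2].
    case: hww' => [[-> ->]|[-> ->]]; split; split => //; by rewrite eq_sym.
  have dC2o' : forall u, u != x -> u != w -> u != w' -> deg C2 u = deg C u.
    move=> u ux uw uw'; apply: dC2o => //.
    - by case: hww' uw uw' => [[-> ->]|[-> ->]].
    - by case: hww' uw uw' => [[-> ->]|[-> ->]].
  have nvw3 : [set v; w] \notin C3.
    rewrite /C3 in_setU1 negb_or; apply/andP; split; first by apply: set2_neq'; dist.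
    rewrite !in_setU1 !negb_or; apply/and3P; split.
    - by apply: set2_neq; dist.
    - by apply: set2_neq; dist.
    - by apply: (deg0_notin dCw); rewrite !inE eqxx orbT.
  have [m4 d4'] := cmove_ok (a:=v) (b:=w) (ltac:(by rewrite eq_sym)) nvw3 nvw d3'
    (ltac:(by rewrite dC3 dC2v !inE eqxx addn1 ltnS (leq_trans dCv)))
    (ltac:(by rewrite dC3 dC2w !inE (negbTE wv) (negbTE wx))).
  apply: (stepC m4 hk6) => k7 lt7 hk7.
  set C4 := [set v; w] |: C3.
  have dC4 : forall u, deg C4 u = deg C2 u + (u \in [set v; x]) + (u \in [set v; w])
    by move=> u; rewrite deg_add // dC3.
  have sB1 : B1 \subset edgesK n by rewrite subUset sub1set f1K sB.
  have sB2 : B2 \subset edgesK n by rewrite subUset sub1set f2K sB1.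
  have sB3 : B3 \subset edgesK n by rewrite subUset sub1set f3K sB2.
  have cB3 : #|B3| <= #|B| + 3.
    have h0 : #|B3| <= #|B2| + 1 := cardsU1_leE _ _.
    have h1 : #|B2| <= #|B1| + 1 := cardsU1_leE _ _.
    have h2 : #|B1| <= #|B| + 1 := cardsU1_leE _ _. clear -h0 h1 h2; lia.
  have cC4 : #|C4| = #|C| + 4.
    rewrite /C4 cardsU1_new // /C3 cardsU1_new // /C2 cardsU1_new // /C1 cardsU1_new //; clear; lia.
  have ssB : B \subset B3.
    by rewrite /B3 /B2 /B1; apply: subset_trans (subsetUr _ _) (subset_trans (subsetUr _ _) (subsetUr _ _)).
  have dx4 : deg C4 x = 3 by rewrite dC4 dC2x !inE eqxx orbT (eq_sym x v) (eq_sym x w) (negbTE vx) (negbTE wx).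
  have dv4 : deg C4 v = deg C v + 2 by rewrite dC4 dC2v !inE !eqxx -addnA.
  have dw4 : deg C4 w = 2 by rewrite dC4 dC2w !inE eqxx (negbTE wv) (negbTE wx) orbT.
  have dw'4 : deg C4 w' = 1.
    by rewrite dC4 dC2w' !inE (negbTE w'v) (negbTE w'x) (eq_sym w' w) (negbTE ww').
  have do4 : forall u, u != x -> u != v -> u != w -> u != w' -> deg C4 u = deg C u.
    by move=> u ux uv uw uw'; rewrite dC4 dC2o' // !inE (negbTE ux) (negbTE uv) (negbTE uw) /= !addn0.
  have invB : forall B' : E, B3 \subset B' -> B' \subset edgesK n -> #|B'| <= #|B3| + 1 -> Inv d C4 B'.
    move=> B' s1 s2 s3.
    apply: (inv_final (P := [set x; v; w]) inv).
    - by rewrite /C4 /C3 /C2 /C1 !subUset !sub1set (cmove_edge m1) (cmove_edge m2) (cmove_edge m3) (cmove_edge m4) sC.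
    - exact: s2.
    - have hB' : #|B'| <= #|B| + 4 by clear -s3 cB3; lia.
      rewrite cC4; clear -BC hB'; lia.
    - exact: d4'.
    - apply: (newtri (a:=x) (b:=v) (c:=w)).
      + by rewrite eq_sym.
      + by rewrite eq_sym.
      + by rewrite eq_sym.
      + by rewrite [[set x; v]]setUC /C4 /C3 !inE eqxx !orbT.
      + by rewrite /C4 /C3; do 2! apply: setU1r.
      + by rewrite /C4 !inE eqxx.
      + by rewrite /C4 /C3 /C2 /C1; do 3! apply: subset_trans (subsetUr _ _); exact: subsetUr.
      + by apply: (deg0_notin dCx); rewrite !inE eqxx.
    - exact: card3.
    - move=> u hu du; move: hu; rewrite !inE !negb_or => /andP [/andP [ux uv] uw].
      case: (u =P w') => [->|/eqP uw']; first by rewrite dw'4.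
      by rewrite do4.
    - have sQ : Qs d C4 B' \subset (Q :\ v) :|: [set w'].
        apply/subsetP => u; rewrite !inE => /andP [/eqP du bu].
        case: (u =P w') => [_|/eqP uw']; first by rewrite orbT.
        rewrite orbF.
        have ux : u != x by apply/eqP => E0; move: du; rewrite E0 dx4.
        have uv : u != v by apply/eqP => E0; move: du; rewrite E0 dv4 addn2.
        have uw : u != w by apply/eqP => E0; move: du; rewrite E0 dw4.
        rewrite uv /= -(do4 u) // du eqxx /=.
        exact: leq_trans (deg_mono _ (subset_trans ssB s1)) bu.
      exact: (q_bound sQ Q2 vQ).
  apply: stepB hk7 _ _.
    move=> /eqP E0.
    have := IH 0 (ltac:(clear -lt1 lt2 lt3 lt4 lt5 lt6 lt7; lia)) C4 B3 (ltac:(by rewrite E0 cards0)) (invB B3 (subxx _) sB3 (leq_addr _ _)).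
    by [].
  move=> f4 k8 hf4 lt8 hk8; apply: IH hk8 _; first by clear -lt1 lt2 lt3 lt4 lt5 lt6 lt7 lt8; lia.
  have [f4K _ _] := bmoveP hf4.
  apply: invB; [exact: subsetUr | by rewrite subUset sub1set f4K sB3 | exact: cardsU1_leE].
have [m3 d3'] := cmove_ok (a:=y) (b:=y') (ltac:(by rewrite eq_sym)) nyy'2 hyy d2
  (ltac:(by rewrite dC2 dCy; do 2! case: (_ \in _)))
  (ltac:(by rewrite dC2 dCy'; do 2! case: (_ \in _))).
apply: (stepC m3 hk4) => k5 lt5 hk5.
set C3 := [set y; y'] |: C2.
have dC3 : forall u, deg C3 u = deg C u + (u \in [set x; y]) + (u \in [set x; y']) + (u \in [set y; y'])
  by move=> u; rewrite deg_add // dC2.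
have sB1 : B1 \subset edgesK n by rewrite subUset sub1set f1K sB.
have sB2 : B2 \subset edgesK n by rewrite subUset sub1set f2K sB1.
have cB2 : #|B2| <= #|B| + 2.
  have h1 : #|B2| <= #|B1| + 1 := cardsU1_leE _ _.
  have h2 : #|B1| <= #|B| + 1 := cardsU1_leE _ _. clear -h1 h2; lia.
have cC3 : #|C3| = #|C| + 3.
  rewrite /C3 cardsU1_new // /C2 cardsU1_new // /C1 cardsU1_new //; clear; lia.
have ssB : B \subset B2 by rewrite /B2 /B1; apply: subset_trans (subsetUr _ _) (subsetUr _ _).
have dx3 : deg C3 x = 2 by rewrite dC3 dCx !inE eqxx (negbTE xy) (eq_sym x y') (negbTE y'x).
have dy3 : deg C3 y = 2 by rewrite dC3 dCy !inE eqxx (eq_sym y x) (negbTE xy) (eq_sym y y') (negbTE y'y).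
have dy'3 : deg C3 y' = 2 by rewrite dC3 dCy' !inE eqxx (negbTE y'x) (negbTE y'y).
have do3 : forall u, u != x -> u != y -> u != y' -> deg C3 u = deg C u.
  by move=> u ux uy uy'; rewrite dC3 !inE (negbTE ux) (negbTE uy) (negbTE uy') /= !addn0.
have invA : forall B' : E, B2 \subset B' -> B' \subset edgesK n -> #|B'| <= #|B2| + 1 -> Inv d C3 B'.
  move=> B' s1 s2 s3.
  apply: (inv_final (P := [set x; y; y']) inv).
  - by rewrite /C3 /C2 /C1 !subUset !sub1set (cmove_edge m1) (cmove_edge m2) (cmove_edge m3) sC.
  - exact: s2.
  - have hB' : #|B'| <= #|B| + 3 by clear -s3 cB2; lia.
    rewrite cC3; clear -BC hB'; lia.
  - exact: d3'.
  - apply: (newtri (a:=x) (b:=y) (c:=y')) => //.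
    + by rewrite eq_sym.
    + by rewrite eq_sym.
    + by rewrite /C3 /C2 /C1 !inE eqxx !orbT.
    + by rewrite /C3 /C2 /C1 !inE eqxx !orbT.
    + by rewrite /C3 !inE eqxx.
    + by rewrite /C3 /C2 /C1; apply: subset_trans (subsetUr _ _) (subset_trans (subsetUr _ _) (subsetUr _ _)).
  - exact: card3.
  - move=> u hu du; move: hu; rewrite !inE !negb_or => /andP [/andP [ux uy] uy'].
    by rewrite do3.
  - apply: leq_trans Q2; apply: subset_leq_card; apply/subsetP => u.
    rewrite !inE => /andP [/eqP du bu].
    have ux : u != x by apply/eqP => E0; move: du; rewrite E0 dx3.
    have uy : u != y by apply/eqP => E0; move: du; rewrite E0 dy3.
    have uy' : u != y' by apply/eqP => E0; move: du; rewrite E0 dy'3.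
    rewrite -(do3 u) // du eqxx /=.
    exact: leq_trans (deg_mono _ (subset_trans ssB s1)) bu.
apply: stepB hk5 _ _.
  move=> /eqP E0.
  have := IH 0 (ltac:(clear -lt1 lt2 lt3 lt4 lt5; lia)) C3 B2 (ltac:(by rewrite E0 cards0)) (invA B2 (subxx _) sB2 (leq_addr _ _)).
  by [].
move=> f3 k6 hf3 lt6 hk6; apply: IH hk6 _; first by clear -lt1 lt2 lt3 lt4 lt5 lt6; lia.
have [f3K _ _] := bmoveP hf3.
apply: invA; [exact: subsetUr | by rewrite subUset sub1set f3K sB2 | exact: cardsU1_leE].
Qed.
End Main.

Lemma init_bound n d : tg n d <= g_value K3 S4 n.
Proof.
apply: main.
  by apply: subset_leq_card; apply/subsetP => e; rewrite !inE => /andP [].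
have deg0 : forall u : 'I_n, deg set0 u = 0.
  by move=> u; apply/eqP; rewrite cards_eq0; apply/eqP/setP => e; rewrite !inE.
split; [exact: sub0set | exact: sub0set | by move=> u; rewrite deg0 | split].
- by rewrite cards0.
- have -> : Dset set0 = [set: 'I_n] by apply/setP => u; rewrite !inE deg0.
  by rewrite cardsT card_ord leq_addl.
- have -> : Qs d (set0 : {set {set 'I_n}}) set0 = set0 by apply/setP => u; rewrite !inE deg0.
  by rewrite cards0.
Qed.

Lemma nat_bound D n d0 : 0 < D -> 36 * D * D + 20 * D <= n ->
  d0 = n %/ (6 * D) -> D * (Lb n d0 + 2) <= n.
Proof.
move=> D0 hn ->.
set d := n %/ (6 * D).
have hd1 : d * (6 * D) <= n := leq_trunc_div _ _.
have hd2 : n < d.+1 * (6 * D) by apply: ltn_ceil; lia.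
set q := (3 * n) %/ d.+1.
have hq1 : q * d.+1 <= 3 * n := leq_trunc_div _ _.
have hq : q < 18 * D.
  rewrite -(ltn_pmul2r (_ : 0 < d.+1)) //; apply: leq_ltn_trans hq1 _.
  have : 3 * n < 3 * (d.+1 * (6 * D)) by rewrite ltn_pmul2l.
  lia.
rewrite /Lb -/q. nia.
Qed.


Import Order.TTheory GRing.Theory Num.Theory.
Local Open Scope ring_scope.

Theorem proposition3p5 :
  forall eps : rat, 0 < eps ->
  exists N : nat, forall n : nat, (N <= n)%N ->
    (n%:R / 3) * (1 - eps) <= (g_value K3 S4 n)%:R :> rat.
Proof.
move=> eps he.
set D := Num.Def.archi_bound (eps^-1).
have hD : eps^-1 < D%:R by apply: archi_boundP; rewrite invr_ge0 ltW.
have D0 : (0 < D)%N.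
  by rewrite -(ltr0n rat); apply: le_lt_trans hD; rewrite invr_ge0 ltW.
have hDe : 1 <= eps * D%:R.
  have : eps * eps^-1 < eps * D%:R by rewrite ltr_pM2l.
  by rewrite mulfV ?lt0r_neq0 // => /ltW.
exists (36 * D * D + 20 * D)%N => n hn.
set g := g_value K3 S4 n.
have h1 := nat_bound D0 hn (erefl _).
have h2 := init_bound n (n %/ (6 * D)).
have h3 : (D * n <= D * (3 * g) + n)%N.
  move: h1 h2; rewrite /tg -/g; set L := Lb n _ => h1 h2.
  have : (n - L <= 3 * ((n - L) %/ 3) + 2)%N by lia.
  nia.
have h3' : (D%:R * n%:R <= D%:R * (3 * g%:R) + n%:R :> rat).
  by move: h3; rewrite -(ler_nat rat) natrD !natrM.
have hn0 : 0 <= n%:R :> rat by rewrite ler0n.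
have hD0 : 0 < D%:R :> rat by rewrite ltr0n.
nra.
Qed.
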